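(* Let $k\ge\ell\ge1$ be integers with $k+\ell\ge6$, let $G$ be a finite digraph, and let $Z\subseteq V(G)$ with $|Z|\ge 2$. Then $$\Pr[\phi\in\mathcal S\text{ and }\mathrm{Im}\,\phi\subseteq Z]\le \frac{(k-1)^{k-1}\ell^\ell}{(m-1)^{m-1}}\,\mu(Z)^2\,\frac{\delta(Z)}{2}\,\max_{z\in Z}\rho_Z(z)^{m-1}.$$
   Context: Put $m=k+\ell$. Digraphs are finite, without loops; $xy$ denotes an arc from $x$ to $y$; two vertices are adjacent if at least one of $xy,yx$ is an arc. The oriented star $S_{k,\ell}$ has a center $c$, a set $O$ of $k$ out-leaves and a set $I$ of $\ell$ in-leaves; its arcs are exactly $co$ ($o\in O$) and $ic$ ($i\in I$). For a digraph $G$ on $n$ vertices, let $\phi$ be a uniformly random map from $V(S_{k,\ell})$ to $V(G)$ (all $n^{m+1}$ maps equally likely), and let $\mathcal S$ be the set of maps $\phi$ that are isomorphisms from $S_{k,\ell}$ onto the induced subdigraph $G[\mathrm{Im}\,\phi]$ (in particular injective). For $A\subseteq V(G)$: $\mu(A)=|A|/n$, and $\rho_A(x)$ is the number of vertices of $A$ adjacent to $x$, divided by $n$. $\delta(Z)$ is the number of adjacent unordered pairs of vertices of $Z$ divided by $\binom{|Z|}{2}$. *)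

(* Defs.v *)
From mathcomp Require Import all_boot all_order all_algebra.
Set Implicit Arguments. Unset Strict Implicit. Unset Printing Implicit Defensive.
Import Order.TTheory GRing.Theory Num.Theory.
Local Open Scope ring_scope.

(* A digraph on a finite vertex type V is an arc relation [arc : rel V]
   (x -> y is an arc iff [arc x y]); loopless is imposed as a hypothesis. *)

Definition adj (V : finType) (arc : rel V) (x y : V) : bool := arc x y || arc y x.

Definition mu (R : realFieldType) (V : finType) (A : {set V}) : R :=
  #|A|%:R / #|V|%:R.

Definition rho (R : realFieldType) (V : finType) (arc : rel V) (A : {set V}) (x : V) : R :=
  #|[set y in A | adj arc x y]|%:R / #|V|%:R.

Definition adj_pairs (V : finType) (arc : rel V) (Z : {set V}) : nat :=
  #|[set p : V * V | [&& p.1 \in Z, p.2 \in Z, p.1 != p.2 & adj arc p.1 p.2]]| %/ 2.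

Definition delta (R : realFieldType) (V : finType) (arc : rel V) (Z : {set V}) : R :=
  (adj_pairs arc Z)%:R / ('C(#|Z|, 2))%:R.

(* The oriented star S_{k,l} on vertex set 'I_(k+l+1):
   vertex 0 is the center c, vertices 1..k are the out-leaves O,
   vertices k+1..k+l are the in-leaves I. Arcs: c o (o in O), i c (i in I). *)
Definition star_arc (k l : nat) : rel 'I_(k + l + 1) :=
  fun i j => ((val i == 0%N) && (1 <= val j <= k)%N)
          || ((k < val i)%N && (val j == 0%N)).

Definition star_iso (V : finType) (arc : rel V) (k l : nat)
    (phi : {ffun 'I_(k + l + 1) -> V}) : bool :=
  injectiveb phi &&
  [forall i, forall j, arc (phi i) (phi j) == @star_arc k l i j].

(* Pr[phi in S and Im phi \subseteq Z] for phi uniform among all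
   n^(m+1) maps V(S_{k,l}) -> V(G) *)
Definition star_prob (R : realFieldType) (V : finType) (arc : rel V) (k l : nat)
    (Z : {set V}) : R :=
  #|[set phi : {ffun 'I_(k + l + 1) -> V} |
      @star_iso V arc k l phi && [forall i, phi i \in Z]]|%:R
  / (#|V| ^ (k + l + 1))%:R.

(* max_{z in Z} rho_Z(z)^(m-1)  (values are >= 0, Z nonempty) *)
Definition max_rho_pow (R : realFieldType) (V : finType) (arc : rel V)
    (Z : {set V}) (e : nat) : R :=
  \big[Num.max/0]_(z in Z) (rho R arc Z z ^+ e).

(* Main.v *)
Require Import Defs.
From mathcomp Require Import all_boot all_order all_algebra ring zify.
Set Implicit Arguments. Unset Strict Implicit. Unset Printing Implicit Defensive.
Import Order.TTheory GRing.Theory Num.Theory.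
Local Open Scope ring_scope.

Lemma divpow (R : realFieldType) (x : R) (p : nat) :
  (x / p%:R) ^+ p * p%:R ^+ p = x ^+ p.
Proof.
case: p => [|p]; first by rewrite !expr0 mulr1.
by rewrite -exprMn divfK // pnatr_eq0.
Qed.

Lemma mulndiv_le (R : realFieldType) (x : R) (p : nat) : 0 <= x ->
  p%:R * (x / p%:R) <= x.
Proof.
move=> hx; case: p => [|p]; first by rewrite mul0r.
by rewrite mulrC divfK // pnatr_eq0.
Qed.

Lemma amgm (R : realFieldType) (x y : R) (p q : nat) :
  0 <= x -> 0 <= y -> (0 < p + q)%N ->
  x ^+ p * y ^+ q <= p%:R ^+ p * q%:R ^+ q / (p + q)%:R ^+ (p + q) * (x + y) ^+ (p + q).
Proof.
move=> hx hy hpq.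
pose E := fun i : 'I_(p + q) => if (i < p)%N then x / p%:R else y / q%:R.
have E0' : forall i, 0 <= E i.
  by move=> i; rewrite /E; case: ifP => _; apply: divr_ge0.
have E0 : {in predT, forall i, 0 <= E i} by move=> i _; apply: E0'.
have h := (leif_AGM E0).1.
rewrite cardT size_enum_ord in h.
have e1 : forall i : 'I_p, E (lshift q i) = x / p%:R by move=> i; rewrite /E /= ltn_ord.
have e2 : forall i : 'I_q, E (rshift p i) = y / q%:R.
  by move=> i; rewrite /E /= ltnNge leq_addr.
have hP : \prod_(i in predT) E i = (x / p%:R) ^+ p * (y / q%:R) ^+ q.
  rewrite big_split_ord /=.
  rewrite (eq_bigr _ (fun i _ => e1 i)) (eq_bigr _ (fun i _ => e2 i)).
  rewrite [X in X * _](eq_bigl xpredT) // [X in _ * X](eq_bigl xpredT) //.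
  by rewrite !big_const_ord !iter_mulr_1.
have hS : \sum_(i in predT) E i <= x + y.
  rewrite big_split_ord /=.
  rewrite (eq_bigr _ (fun i _ => e1 i)) (eq_bigr _ (fun i _ => e2 i)).
  rewrite [X in X + _](eq_bigl xpredT) // [X in _ + X](eq_bigl xpredT) //.
  rewrite !big_const_ord !iter_addr_0 -[(x / p%:R) *+ p]mulr_natl -[(y / q%:R) *+ q]mulr_natl.
  by apply: lerD; apply: mulndiv_le.
rewrite hP in h.
have hN : 0 < (p + q)%:R :> R by rewrite ltr0n.
have h2 : ((\sum_(i in predT) E i) / (p + q)%:R) ^+ (p + q) <= ((x + y) / (p + q)%:R) ^+ (p + q).
  apply: lerXn2r; rewrite ?nnegrE.
  - by apply: divr_ge0; [apply: sumr_ge0 => i _; apply: E0' | exact: ler0n].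
  - by apply: divr_ge0; [apply: addr_ge0 | exact: ler0n].
  by rewrite ler_pM2r ?invr_gt0.
rewrite -(divpow x p) -(divpow y q).
have -> : (x / p%:R) ^+ p * p%:R ^+ p * ((y / q%:R) ^+ q * q%:R ^+ q)
   = (x / p%:R) ^+ p * (y / q%:R) ^+ q * (p%:R ^+ p * q%:R ^+ q) by ring.
have -> : p%:R ^+ p * q%:R ^+ q / (p + q)%:R ^+ (p + q) * (x + y) ^+ (p + q)
   = ((x + y) / (p + q)%:R) ^+ (p + q) * (p%:R ^+ p * q%:R ^+ q) :> R.
  by rewrite expr_div_n; ring.

apply: ler_wpM2r; first by apply: mulr_ge0; apply: exprn_ge0; apply: ler0n.
exact: le_trans h h2.
Qed.

Local Close Scope ring_scope.

Definition Nout (V : finType) (arc : rel V) (Z : {set V}) (c : V) : {set V} :=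
  [set y in Z | arc c y && ~~ arc y c].
Definition Nin (V : finType) (arc : rel V) (Z : {set V}) (c : V) : {set V} :=
  [set y in Z | arc y c && ~~ arc c y].

Definition Fs (V : finType) (arc : rel V) (Z : {set V}) (k l : nat) (c : V)
  (i : 'I_(k + l + 1)) : {set V} :=
  if val i == 0%N then [set c] else if (val i <= k)%N then Nout arc Z c else Nin arc Z c.

Arguments Fs {V} arc Z k l c i.

Lemma card_fam (V : finType) (arc : rel V) (Z : {set V}) (k l : nat) (c : V) :
  #|[set phi : {ffun 'I_(k + l + 1) -> V} | [forall i, phi i \in Fs arc Z k l c i]]|
  = (#|Nout arc Z c| ^ k * #|Nin arc Z c| ^ l)%N.
Proof.
have -> : #|[set phi : {ffun 'I_(k + l + 1) -> V} | [forall i, phi i \in Fs arc Z k l c i]]|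
   = #|family (fun i => mem (Fs arc Z k l c i))|.
  apply: eq_card => phi; rewrite inE. apply/forallP/familyP => h i; exact: h.
rewrite card_family foldrE big_map big_enum /=.
pose g := fun j : nat => if j == 0%N then 1%N else if (j <= k)%N then #|Nout arc Z c| else #|Nin arc Z c|.
rewrite (eq_bigr (fun i : 'I_(k + l + 1) => g i)); last first.
  move=> i _; rewrite /g /Fs; case: ifP => _; first by rewrite cards1.
  by case: ifP.
rewrite -(big_mkord xpredT g).
have h0 : (0 < k + l + 1)%N by rewrite addn1.
rewrite big_ltn // {1}/g eqxx mul1n.
rewrite (big_cat_nat _ (n := k.+1)) //=; last by rewrite addn1 ltnS leq_addr.
rewrite (eq_big_nat _ _ (F2 := fun _ => #|Nout arc Z c|)); last first.
  by move=> i /andP[hi1 hi2]; rewrite /g; case: eqP => [?|_]; [lia|]; case: ifP => ?; lia.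
rewrite [X in (_ * X)%N](eq_big_nat _ _ (F2 := fun _ => #|Nin arc Z c|)); last first.
  by move=> i /andP[hi1 hi2]; rewrite /g; case: eqP => [?|_]; [lia|]; case: ifP => ?; lia.
rewrite !prod_nat_const_nat; congr (_ ^ _ * _ ^ _); lia.
Qed.

Lemma count_stars (V : finType) (arc : rel V) (Z : {set V}) (k l : nat) :
  (#|[set phi : {ffun 'I_(k + l + 1) -> V} |
      @star_iso V arc k l phi && [forall i, phi i \in Z]]|
   <= \sum_(c in Z) #|Nout arc Z c| ^ k * #|Nin arc Z c| ^ l)%N.
Proof.
set S := [set phi | _].
have h0 : (0 < k + l + 1)%N by rewrite addn1.
pose i0 : 'I_(k + l + 1) := Ordinal h0.
pose T c := [set phi : {ffun 'I_(k + l + 1) -> V} | [forall i, phi i \in Fs arc Z k l c i]].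
have key : forall phi, phi \in S -> phi i0 \in Z /\ phi \in T (phi i0).
  move=> phi; rewrite inE /star_iso => H; case: (andP H) => H1 H3; case: (andP H1) => _ H2.
  have hiso := elimT forallP H2; have hZ := elimT forallP H3.
  have ha : forall i j, arc (phi i) (phi j) = star_arc i j.
    by move=> i j; have /forallP h := hiso i; apply/eqP; exact: h.
  split; first exact: hZ.
  rewrite inE; apply/forallP => i; rewrite /Fs.
  case: eqP => [hi|hi].
    have -> : i = i0 by apply: val_inj.
    by rewrite inE.
  case: ifP => hik; rewrite inE hZ /= !ha /star_arc /=.
    have hj : (0 < i)%N by rewrite lt0n; apply/eqP.
    have hk : (i <= k)%N := hik.
    rewrite andbF orbF andbT; apply/andP; split; first by apply/andP; split; [exact: hj | exact: hk].
    rewrite -leqNgt; exact: hk.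
  have hk : (k < i)%N by rewrite ltnNge; apply/negbT.
  rewrite andbF orbF andbT; apply/andP; split; first exact: hk.
  rewrite negb_and; apply/orP; right; rewrite -ltnNge; exact: hk.
have cardT : forall c, (\sum_phi (phi \in T c) = #|T c|)%N.
  by move=> c; rewrite -sum1_card [RHS]big_mkcond; apply: eq_bigr => phi _; case: (phi \in T c).
rewrite -(eq_bigr _ (fun c _ => card_fam arc Z k l c)) -/T.
under [X in (_ <= X)%N]eq_bigr do rewrite -cardT.
rewrite exchange_big /=.
rewrite -sum1_card.
have step1 : (\sum_(phi in S) 1 <= \sum_(phi in S) \sum_(c in Z) (phi \in T c : nat))%N.
  apply: leq_sum => phi /key [hz ht]; rewrite (bigD1 (phi i0)) //= ht.
  by rewrite addn_gt0.
apply: (leq_trans step1).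
rewrite [X in (_ <= X)%N](bigID (fun phi => phi \in S)) /=.
exact: leq_addr.
Qed.

Lemma deg_le (V : finType) (arc : rel V) (Z : {set V}) (c : V) :
  (#|Nout arc Z c| + #|Nin arc Z c| <= #|[set y in Z | adj arc c y]|)%N.
Proof.
have hI : Nout arc Z c :&: Nin arc Z c = set0.
  apply/setP => y; rewrite !inE.
  by case: (arc c y); case: (arc y c); rewrite ?andbF ?andbT.
have := cardsU (Nout arc Z c) (Nin arc Z c); rewrite hI cards0 subn0 => <-.
apply: subset_leq_card; apply/subsetP => y; rewrite !inE /adj.
by case: (y \in Z); case: (arc c y); case: (arc y c).
Qed.

Lemma sum_out (V : finType) (arc : rel V) (Z : {set V}) :
  (\sum_(c in Z) #|Nout arc Z c| <= adj_pairs arc Z)%N.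
Proof.
pose D := [set p : V * V | [&& p.1 \in Z, p.2 \in Z, arc p.1 p.2 & ~~ arc p.2 p.1]].
pose P := [set p : V * V | [&& p.1 \in Z, p.2 \in Z, p.1 != p.2 & adj arc p.1 p.2]].
have hD : (\sum_(c in Z) #|Nout arc Z c| = #|D|)%N.
  rewrite -sum1_card.
  under eq_bigr do rewrite -sum1_card big_mkcond /=.
  rewrite pair_big /= [RHS]big_mkcond [LHS]big_mkcond /=.
  apply: eq_bigr => [[c y]] _ /=; rewrite !inE /= andbT.
  by case: (c \in Z); case: (y \in Z).
rewrite hD /adj_pairs leq_divRL //.
pose sw := fun p : V * V => (p.2, p.1).
have swK : involutive sw by case.
have hsw : #|sw @: D| = #|D| by apply: card_imset; exact: inv_inj.
have hI : D :&: sw @: D = set0.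
  apply/setP => p; rewrite !inE; apply/negP => /andP[/and4P[_ _ h1 h2]].
  case/imsetP => q; rewrite inE => /and4P[_ _ h3 h4] hq.
  by move: h2; rewrite hq /= h3.
have := cardsU D (sw @: D); rewrite hI cards0 subn0 hsw => hU.
rewrite muln2 -addnn -hU.
apply: subset_leq_card; apply/subsetP => p; rewrite !inE /adj.
case/orP.
  case/and4P => -> -> h1 h2; rewrite h1 /= andbT.
  by apply/eqP => e; move: h1 h2; rewrite e => ->.
case/imsetP => q; rewrite inE => /and4P[h1 h2 h3 h4] ->; rewrite /= h1 h2 h3 orbT /= andbT.
by apply/eqP => e; move: h3 h4; rewrite e => ->.
Qed.

Lemma bin2_le (z : nat) : ('C(z, 2) * 2 <= z * z)%N.
Proof.
rewrite bin2 muln2 halfK; apply: leq_trans (leq_subr _ _) _.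
by apply: leq_mul => //; apply: leq_pred.
Qed.

Local Open Scope ring_scope.

Unset Implicit Arguments.

Theorem lemma4 (R : realFieldType) (k l : nat) (V : finType) (arc : rel V)
    (Z : {set V}) :
  (1 <= l)%N -> (l <= k)%N -> (6 <= k + l)%N ->
  (forall x : V, ~~ arc x x) ->
  (2 <= #|Z|)%N ->
  star_prob R arc k l Z <=
    ((k - 1)%:R ^+ (k - 1) * l%:R ^+ l / (k + l - 1)%:R ^+ (k + l - 1))
    * mu R Z ^+ 2 * (delta R arc Z / 2) * max_rho_pow R arc Z (k + l - 1).
Proof.
move=> hl hlk _ _ hZ.
have [p ->] : exists p, k = p.+1 by exists k.-1; rewrite prednK // (leq_trans hl hlk).
rewrite subn1 addSn subn1 /=.
set C := (p%:R ^+ p * l%:R ^+ l / (p + l)%:R ^+ (p + l)) : R.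
set M := max_rho_pow R arc Z (p + l).
set A := adj_pairs arc Z.
have hnV : (0 < #|V|)%N by apply: leq_trans _ (max_card (mem Z)); apply: leq_trans hZ.
set n := #|V|%:R : R.
have hn : 0 < n by rewrite ltr0n.
have hC : 0 <= C.
  by apply: divr_ge0; [apply: mulr_ge0|]; apply: exprn_ge0; apply: ler0n.
have hM : 0 <= M by apply: bigmax_ge_id.
have hterm : forall c, c \in Z ->
    (#|Nout arc Z c| ^ p.+1 * #|Nin arc Z c| ^ l)%:R
      <= #|Nout arc Z c|%:R * (C * (n ^+ (p + l) * M)) :> R.
  move=> c hc.
  rewrite natrM !natrX exprS -mulrA.
  apply: ler_wpM2l; first exact: ler0n.
  apply: le_trans (amgm (ler0n _ _) (ler0n _ _) _) _; first lia.
  rewrite -/C; apply: ler_wpM2l => //.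
  have hd : (#|Nout arc Z c|%:R + #|Nin arc Z c|%:R : R)
      <= n * rho R arc Z c.
    rewrite /rho -/n mulrC divfK ?gt_eqF // -natrD ler_nat; exact: deg_le.
  apply: le_trans (lerXn2r _ _ _ hd) _; rewrite ?nnegrE.
  - by apply: addr_ge0; apply: ler0n.
  - by apply: mulr_ge0; [exact: ltW | apply: divr_ge0; apply: ler0n].
  rewrite exprMn; apply: ler_wpM2l; first by apply: exprn_ge0; exact: ltW.
  exact: (@le_bigmax_cond _ _ _ 0 _ _ (fun z => rho R arc Z z ^+ (p + l)) hc).
have hS : star_prob R arc p.+1 l Z <= A%:R * (C * (n ^+ (p + l) * M)) / n ^+ (p.+1 + l + 1).
  rewrite /star_prob natrX -/n.
  apply: ler_wpM2r; first by rewrite invr_ge0; apply: exprn_ge0; exact: ltW.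
  apply: (@le_trans _ _ ((\sum_(c in Z) #|Nout arc Z c| ^ p.+1 * #|Nin arc Z c| ^ l)%N%:R)).
    by rewrite ler_nat; exact: count_stars.
  rewrite natr_sum.
  apply: le_trans (ler_sum _ hterm) _.
  rewrite -mulr_suml; apply: ler_wpM2r; first by apply: mulr_ge0 => //; apply: mulr_ge0 => //; apply: exprn_ge0; exact: ltW.
  rewrite -natr_sum ler_nat; exact: sum_out.
apply: le_trans hS _.
set z := #|Z|.
have hz : 0 < z%:R :> R by rewrite ltr0n; lia.
have hB : (0 < 'C(z, 2))%N by rewrite bin_gt0.
have hB' : 0 < ('C(z, 2))%:R :> R by rewrite ltr0n.
have hzb : ('C(z, 2))%:R * 2 <= z%:R * z%:R :> R.
  by rewrite -(natrM _ _ 2) -natrM ler_nat; exact: bin2_le.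
rewrite /mu /delta -/n -/A -/z.
have -> : A%:R * (C * (n ^+ (p + l) * M)) / n ^+ (p.+1 + l + 1)
    = (C * M * A%:R) / (n * n).
  rewrite (_ : (p.+1 + l + 1 = p + l + 2)%N); last by lia.
  rewrite (exprD n (p + l) 2) expr2; field; rewrite ?mulf_neq0 ?expf_neq0 ?gt_eqF //.
have -> : C * (z%:R / n) ^+ 2 * (A%:R / ('C(z, 2))%:R / 2) * M
    = (C * M * A%:R / (n * n)) * ((z%:R * z%:R) / (('C(z, 2))%:R * 2)).
  by rewrite expr2; field; rewrite ?mulf_neq0 ?gt_eqF.
have hCMA : 0 <= C * M * A%:R / (n * n).
  by apply: divr_ge0; [apply: mulr_ge0; [apply: mulr_ge0|apply: ler0n] | apply: mulr_ge0; exact: ltW].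
rewrite ler_peMr // ler_pdivlMr ?mul1r //.
by apply: mulr_gt0.
Qed.
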